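(* Let $\mathscr{F}(r)=\int_0^1 t^{r-1/2}\sqrt{1+t}\,\arcsin t\,\mathrm{d}t$ for nonnegative integers $r$. Then for every nonnegative integer $r$, $$\mathscr{F}(r)=\frac{(-1)^r}{4^r}\frac{\binom{2r}{r}}{r+1}\left(\mathscr{F}(0)+\frac{1}{2}\sum_{k=1}^r\frac{(-1)^k4^k}{\binom{2k}{k}}\,\omega_k\right),$$ where $\omega_k=2\sqrt{2}\pi-2B(k+3/2,1/2)-2B(k+1/2,1/2)$.
   Context: $B(u,v)=\int_0^1 t^{u-1}(1-t)^{v-1}\,\mathrm{d}t$ denotes the Beta function. *)

(* Defs.v *)
From HB Require Import structures.
From mathcomp Require Import all_boot all_order all_algebra.
From mathcomp Require Import all_classical all_reals all_analysis.
Set Implicit Arguments. Unset Strict Implicit. Unset Printing Implicit Defensive.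
Import Order.TTheory GRing.Theory Num.Theory.
Local Open Scope classical_set_scope.
Local Open Scope ring_scope.

Definition Beta (R : realType) (u v : R) : R :=
  \int[lebesgue_measure]_(t in `[0%R, 1%R]) (t `^ (u - 1) * (1 - t) `^ (v - 1)).

Definition scrF (R : realType) (r : nat) : R :=
  \int[lebesgue_measure]_(t in `[0%R, 1%R])
     (t `^ (r%:R - 2^-1) * Num.sqrt (1 + t) * asin t).

Definition omega (R : realType) (k : nat) : R :=
  2 * Num.sqrt 2 * pi - 2 * Beta (k%:R + 3 / 2) (2^-1)
    - 2 * Beta (k%:R + 2^-1) (2^-1).

(* Main.v *)
Require Import Defs.
From HB Require Import structures.
From mathcomp Require Import all_boot all_order all_algebra.
From mathcomp Require Import all_classical all_reals all_analysis.
From mathcomp Require Import ring lra measurable_realfun.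
Import Order.TTheory GRing.Theory Num.Theory.
Import numFieldNormedType.Exports.
Local Open Scope classical_set_scope.
Local Open Scope ring_scope.

Section Rec.
Variable R : realType.
Local Notation mu := (@lebesgue_measure R).

Lemma ge0_FTC_oo (g H : R -> R) (a b : R) : a < b ->
  (forall x, a < x < b -> 0 <= g x) ->
  {in `]a, b[, continuous g} ->
  derivable_oo_LRcontinuous H a b ->
  {in `]a, b[, (H^`())%classic =1 g} ->
  (\int[mu]_(x in `]a, b[) (g x)%:E = (H b - H a)%:E)%E.
Proof.
move=> ab g0 cg dH Hg.
pose e n : R := (b - a) / 4 * harmonic n.
have ba0 : 0 < b - a by rewrite subr_gt0.
have e0 n : 0 < e n by rewrite /e mulr_gt0 ?divr_gt0 ?harmonic_gt0.
have eb n : e n <= (b - a) / 4.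
  rewrite /e; apply: ler_piMr; first by rewrite divr_ge0 // ltW.
  by rewrite /harmonic /= invf_le1 ?ler1n ?ltr0n.
have ecvg : e n @[n --> \oo] --> 0.
  rewrite -(mulr0 ((b - a) / 4)); apply: cvgMr; exact: cvg_harmonic.
pose F n := `[a + e n, b - e n]%classic.
have Fab n : a + e n < b - e n by have := eb n; have := e0 n; lra.
have ndF : {homo F : n m / (n <= m)%N >-> (n <= m)%O}.
  apply/nondecreasing_seqP => n; rewrite subsetEset; apply: subset_itv;
    rewrite bnd_simp.
    rewrite lerD2l /e ler_pM2l ?divr_gt0 // /harmonic /=.
    by rewrite lef_pV2 ?posrE ?ltr0n // ler_nat.
  rewrite lerD2l lerN2 /e ler_pM2l ?divr_gt0 // /harmonic /=.
  by rewrite lef_pV2 ?posrE ?ltr0n // ler_nat.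
have FS n : F n `<=` `]a, b[%classic.
  move=> x; rewrite /F /= !in_itv /= => /andP[h1 h2].
  by apply/andP; split; have := e0 n; lra.
have UF : \bigcup_n F n = `]a, b[%classic.
  apply/seteqP; split.
    by move=> x [n _]; apply: FS.
  move=> x; rewrite /= in_itv /= => /andP[ax xb].
  have m0 : 0 < Num.min (x - a) (b - x) by rewrite lt_min !subr_gt0 ax xb.
  have /cvgrPdist_lt/(_ _ m0) := ecvg.
  case=> N _ HN; exists N => //.
  have := HN N (leqnn N).
  rewrite /= sub0r normrN gtr0_norm // lt_min => /andP[h1 h2].
  rewrite /F /= in_itv /=; apply/andP; split; lra.
have mg : measurable_fun `]a, b[%classic g.
  by apply: open_continuous_measurable_fun => //; apply/in_continuous_mksetP.
have mF n : measurable (F n) by exact: measurable_itv.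
have mf n : measurable_fun (F n) (EFin \o g).
  by apply/measurable_EFinP; apply: measurable_funS mg.
have f0 n x : F n x -> (0 <= (EFin \o g) x)%E.
  move=> /(FS n); rewrite /= in_itv /= => xab.
  by rewrite lee_fin g0.
have L1 : ((\int[mu]_(x in F n) (EFin \o g) x) @[n --> \oo] -->
    \int[mu]_(x in `]a, b[) (EFin \o g) x)%E.
  rewrite -UF; exact: ge0_nondecreasing_set_cvg_integral.
have IF n : (\int[mu]_(x in F n) (EFin \o g) x =
    (H (b - e n) - H (a + e n))%:E)%E.
  rewrite EFinB; apply: continuous_FTC2 (Fab n) _ _ _.
  - apply: continuous_in_subspaceT => x xF; apply: cg.
    by rewrite inE in xF; have := FS n x xF.
  - apply: derivable_oo_continuousW (Fab n) _ dH.
    apply: subset_itv; rewrite bnd_simp; have := e0 n; lra.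
  - move=> x xF; apply: Hg.
    move: xF; rewrite in_itv /= => /andP[h1 h2].
    have : F n x by rewrite /F /= in_itv /=; apply/andP; split; lra.
    by move/FS.
have L2 : ((H (b - e n) - H (a + e n))%:E @[n --> \oo] --> (H b - H a)%:E)%E.
  apply: cvg_EFin; first exact: nearW.
  apply: cvgB.
    case: dH => _ _ /cvg_at_leftP; apply; split.
      by move=> n; have := e0 n; lra.
    by have := cvgB (cvg_cst b) ecvg; rewrite subr0; apply.
  case: dH => _ /cvg_at_rightP + _; apply; split.
    by move=> n; have := e0 n; lra.
  by have := cvgD (cvg_cst a) ecvg; rewrite addr0; apply.
rewrite (eq_cvg _ _ IF) in L1.
exact: (cvg_unique _ L1 L2).
Qed.


Lemma is_derive_cont (f : R -> R) (x d : R) : is_derive x (1:R) f d -> {for x, continuous f}.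
Proof. by move=> [df _]; apply: differentiable_continuous; exact/derivable1_diffP. Qed.

Lemma asin_ge0 (t : R) : 0 <= t <= 1 -> 0 <= asin t.
Proof.
move=> /andP[t0 t1]; rewrite leNgt; apply/negP => neg.
have tI : -1 <= t <= 1 by apply/andP; split; lra.
have h : 0 < sin (- asin t).
  apply: sin_gt0_pi; apply/andP; split; first by rewrite oppr_gt0.
  have := asin_geNpi2 tI; have := @pi_gt0 R; lra.
have [_ st] := asin_def tI.
by rewrite sinN st in h; lra.
Qed.

Lemma asin1 : asin (1 : R) = pi / 2.
Proof.
rewrite -{1}sin_pihalf sinK // in_itv /=; have := @pi_gt0 R.
by move=> h; apply/andP; split; lra.
Qed.

Lemma asin_cont : {within `[-1, 1], continuous (@asin R)}.
Proof.
have h := @segment_can_le_continuous R (-(pi/2)) (pi/2) sin asin.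
rewrite sinN sin_pihalf in h; apply: h.
- by have := @pi_gt0 R; lra.
- by apply: continuous_subspaceT => x; exact: continuous_sin.
- exact: sinK.
Qed.

Lemma dA (a t : R) : 0 < t < 1 ->
  exists d, is_derive t 1 (fun x : R => x `^ a * Num.sqrt (1 + x) * asin x) d.
Proof.
move=> /andP[t0 t1]; eexists.
have h1 := is_derive1_powR a t0.
have hL : is_derive t 1 (fun x : R => 1 + x) (0 + 1).
  by have := is_deriveD (is_derive_cst (1:R) t 1) (is_derive_id t 1); apply.
have hS : is_derive (1 + t) 1 (@Num.sqrt R) ((2 * Num.sqrt (1+t))^-1).
  by apply: is_derive1_sqrt; lra.
have hLS := is_derive1_comp hS hL.
have h2 : -1 < t < 1 by lra.
have h3 := is_derive1_asin h2.
by have := is_deriveM (is_deriveM h1 hLS) h3; apply.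
Qed.

Lemma dB (a c t : R) : 0 < t < 1 ->
  exists d, is_derive t 1 (fun x : R => x `^ a * (1 - x) `^ c) d.
Proof.
move=> /andP[t0 t1]; eexists.
have h1 := is_derive1_powR a t0.
have hL : is_derive t 1 (fun x : R => 1 - x) (0 - 1).
  by have := is_deriveB (is_derive_cst (1:R) t 1) (is_derive_id t 1); apply.
have hP : is_derive (1 - t) 1 (@powR R ^~ c) (c * (1 - t) `^ (c - 1)).
  by apply: is_derive1_powR; lra.
have hLP := is_derive1_comp (f := @powR R ^~ c) (g := fun x : R => 1 - x) hP hL.
by have := is_deriveM h1 hLP; apply.
Qed.

Lemma dZ (c : R) (f : R -> R) (t : R) : (exists d, is_derive t 1 f d) ->
  exists d, is_derive t 1 (fun x => c * f x) d.
Proof.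
move=> [d hd]; eexists.
by have := is_deriveM (is_derive_cst c t 1) hd; apply.
Qed.

Lemma dD (f g : R -> R) (t : R) : (exists d, is_derive t 1 f d) ->
  (exists d, is_derive t 1 g d) ->
  exists d, is_derive t 1 (fun x => f x + g x) d.
Proof.
move=> [d hd] [d' hd']; eexists.
by have := is_deriveD hd hd'; apply.
Qed.

Lemma mcont (f : R -> R) : (forall t : R, 0 < t < 1 -> exists d : R, is_derive t (1:R) f d) ->
  measurable_fun (`]0, 1[%classic : set R) f.
Proof.
move=> hf; apply: open_continuous_measurable_fun; first exact: interval_open.
move=> x; rewrite inE /= in_itv /= => xI.
by have [d hd] := hf x xI; exact: is_derive_cont hd.
Qed.

Lemma int_cc_oo (f : R -> R) : measurable_fun (`]0, 1[%classic : set R) f ->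
  (\int[mu]_(x in `[0%R, 1%R]) (f x)%:E = \int[mu]_(x in `]0%R, 1%R[) (f x)%:E)%E.
Proof.
move=> mf.
rewrite -integral_itv_obnd_cbnd; last first.
  by apply/measurable_EFinP; apply: measurable_fun_itv_oc mf.
rewrite -integral_itv_bndo_bndc //.
by apply/measurable_EFinP.
Qed.


Definition f1 (r : nat) (t : R) := t `^ (r.+1%:R - 2^-1) * Num.sqrt (1 + t) * asin t.
Definition f2 (r : nat) (t : R) := t `^ (r%:R - 2^-1) * Num.sqrt (1 + t) * asin t.
Definition b1 (r : nat) (t : R) := t `^ (r.+1%:R + 3 / 2 - 1) * (1 - t) `^ (2^-1 - 1).
Definition b2 (r : nat) (t : R) := t `^ (r.+1%:R + 2^-1 - 1) * (1 - t) `^ (2^-1 - 1).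
Definition gg (r : nat) (t : R) := (2 * r%:R + 4) * f1 r t + (2 * r%:R + 1) * f2 r t
   + 2 * b1 r t + 2 * b2 r t.
Definition HH (r : nat) (t : R) :=
  2 * t `^ (r.+1%:R - 2^-1) * (1 + t) * Num.sqrt (1 + t) * asin t.

Lemma deriv_HH r (t : R) : 0 < t < 1 -> is_derive t (1:R) (HH r) (gg r t).
Proof.
move=> /andP[t0 t1].
set p : R := r.+1%:R - 2^-1.
have h1 := is_derive1_powR p t0.
have h0 := is_deriveM (is_derive_cst (2:R) t 1) h1.
have hL : is_derive t 1 (fun x : R => 1 + x) (0 + 1).
  by have := is_deriveD (is_derive_cst (1:R) t 1) (is_derive_id t 1); apply.
have hS : is_derive (1 + t) 1 (@Num.sqrt R) ((2 * Num.sqrt (1+t))^-1).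
  by apply: is_derive1_sqrt; lra.
have hLS := is_derive1_comp hS hL.
have h2 : -1 < t < 1 by lra.
have h3 := is_derive1_asin h2.
eapply is_derive_eq.
  by have := is_deriveM (is_deriveM (is_deriveM h0 hL) hLS) h3; apply.
have mE (f g : R -> R) x : (f * g) x = f x * g x by [].
have sE (a b : R) : a *: b = a * b by [].
rewrite !mE !sE /=.
have pw (a : R) : t `^ (a + 1) = t * t `^ a.
  rewrite powRD; last by rewrite (gt_eqF t0) implybT.
  by rewrite powRr1 ?ltW // mulrC.
set P0 := t `^ (r%:R - 2^-1).
have e0 : t `^ (p - 1) = P0.
  by rewrite /P0 /p; congr (_ `^ _); rewrite -natr1; ring.
have e1 : t `^ p = t * P0.
  by rewrite /P0 -pw /p; congr (_ `^ _); rewrite -natr1; ring.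
have e2 : t `^ (r.+1%:R + 3 / 2 - 1) = t * t * P0.
  by rewrite /P0 -mulrA -!pw; congr (_ `^ _); rewrite -natr1; field.
have e3 : t `^ (r.+1%:R + 2^-1 - 1) = t * P0.
  by rewrite /P0 -!pw; congr (_ `^ _); rewrite -natr1; field.
have e4 : (1 - t) `^ (2^-1 - 1) = (Num.sqrt (1 - t))^-1.
  rewrite (_ : 2^-1 - 1 = - 2^-1); last by field.
  by rewrite powRN powR12_sqrt // subr_ge0 ltW.
have e5 : Num.sqrt (1 - t ^+ 2) = Num.sqrt (1 - t) * Num.sqrt (1 + t).
  by rewrite -sqrtrM ?subr_ge0 ?ltW //; congr Num.sqrt; ring.
rewrite /gg /f1 /f2 /b1 /b2 -/p -/P0 e0 e1 e2 e3 e4 e5.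
have hS2 : Num.sqrt (1 + t) ^+ 2 = 1 + t by rewrite sqr_sqrtr //; lra.
have S0 : Num.sqrt (1 + t) != 0 by rewrite sqrtr_eq0 -ltNge; lra.
have Q0 : Num.sqrt (1 - t) != 0 by rewrite sqrtr_eq0 -ltNge; lra.
rewrite /p; move: hS2 S0 Q0; clear e0 e1 e2 e3 e4 e5 pw h0 h1 h2 h3 hL hS hLS.
move: (Num.sqrt (1 + t)) (Num.sqrt (1 - t)) (asin t) P0 => S Q A P hS S0 Q0.
rewrite (_ : t = S ^+ 2 - 1); last by rewrite hS; ring.
rewrite -[(r.+1)%:R]natr1.
by field; rewrite S0 Q0.
Qed.


Local Notation Dv u := (forall t : R, 0 < t < 1 -> exists d : R, is_derive t (1:R) u d).
Local Notation Nn u := (forall t : R, 0 < t < 1 -> 0 <= u t).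
Local Notation I u := (\int[mu]_(x in `]0%R, 1%R[) (u x)%:E)%E.

Lemma splitD (u v : R -> R) : Nn u -> Nn v -> Dv u -> Dv v ->
  (\int[mu]_(x in `]0%R, 1%R[) ((u x + v x)%:E) = I u + I v)%E.
Proof.
move=> nu nv du dv.
under eq_integral do rewrite EFinD.
apply: ge0_integralD => //.
all: try (by apply/measurable_EFinP; exact: mcont).
all: by move=> x; rewrite /= in_itv /= => xI; rewrite lee_fin ?nu ?nv.
Qed.

Lemma splitZ (c : R) (u : R -> R) : 0 <= c -> Nn u -> Dv u ->
  (\int[mu]_(x in `]0%R, 1%R[) ((c * u x)%:E) = c%:E * I u)%E.
Proof.
move=> c0 nu du.
under eq_integral do rewrite EFinM.
apply: ge0_integralZl_EFin => //.
all: try (by apply/measurable_EFinP; exact: mcont).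
all: by move=> x; rewrite /= in_itv /= => xI; rewrite lee_fin ?nu.
Qed.

Lemma I_ge0 (u : R -> R) : Nn u -> (0 <= I u)%E.
Proof.
by move=> nu; apply: integral_ge0 => x; rewrite /= in_itv /= => xI; rewrite lee_fin nu.
Qed.

Lemma finZ (c : R) (J : \bar R) : 0 < c -> (c%:E * J)%E \is a fin_num -> J \is a fin_num.
Proof.
move=> c0 h; have -> : J = ((c^-1)%:E * (c%:E * J))%E.
  by rewrite muleA -EFinM mulVf ?gt_eqF // mul1e.
exact: fin_numM.
Qed.

Lemma Df1 r : Dv (f1 r). Proof. by move=> t tI; exact: dA. Qed.
Lemma Df2 r : Dv (f2 r). Proof. by move=> t tI; exact: dA. Qed.
Lemma Db1 r : Dv (b1 r). Proof. by move=> t tI; exact: dB. Qed.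
Lemma Db2 r : Dv (b2 r). Proof. by move=> t tI; exact: dB. Qed.

Lemma Nf1 r : Nn (f1 r).
Proof.
move=> t /andP[t0 t1]; rewrite /f1 !mulr_ge0 ?powR_ge0 ?sqrtr_ge0 //.
by apply: asin_ge0; apply/andP; split; lra.
Qed.
Lemma Nf2 r : Nn (f2 r).
Proof.
move=> t /andP[t0 t1]; rewrite /f2 !mulr_ge0 ?powR_ge0 ?sqrtr_ge0 //.
by apply: asin_ge0; apply/andP; split; lra.
Qed.
Lemma Nb1 r : Nn (b1 r). Proof. by move=> t _; rewrite /b1 mulr_ge0 ?powR_ge0. Qed.
Lemma Nb2 r : Nn (b2 r). Proof. by move=> t _; rewrite /b2 mulr_ge0 ?powR_ge0. Qed.

Lemma NZ (c : R) (u : R -> R) : 0 <= c -> Nn u -> Nn (fun x => c * u x).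
Proof. by move=> c0 nu t tI; rewrite mulr_ge0 // nu. Qed.
Lemma ND (u v : R -> R) : Nn u -> Nn v -> Nn (fun x => u x + v x).
Proof. by move=> nu nv t tI; rewrite addr_ge0 // ?nu ?nv. Qed.
Lemma DZ (c : R) (u : R -> R) : Dv u -> Dv (fun x => c * u x).
Proof. by move=> du t tI; apply: dZ; exact: du. Qed.
Lemma DD (u v : R -> R) : Dv u -> Dv v -> Dv (fun x => u x + v x).
Proof. by move=> du dv t tI; apply: dD; [exact: du | exact: dv]. Qed.


End Rec.

Arguments f1 {R}.
Arguments f2 {R}.
Arguments b1 {R}.
Arguments b2 {R}.
Arguments gg {R}.
Arguments HH {R}.
Arguments is_derive_cont {R}.
Arguments asin_ge0 {R}.
Arguments asin1 {R}.
Arguments asin_cont {R}.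
Arguments dA {R}.
Arguments dB {R}.
Arguments dZ {R}.
Arguments dD {R}.
Arguments mcont {R}.
Arguments int_cc_oo {R}.
Arguments deriv_HH {R}.
Arguments splitD {R}.
Arguments splitZ {R}.
Arguments I_ge0 {R}.
Arguments finZ {R}.
Arguments Df1 {R}.
Arguments Df2 {R}.
Arguments Db1 {R}.
Arguments Db2 {R}.
Arguments Nf1 {R}.
Arguments Nf2 {R}.
Arguments Nb1 {R}.
Arguments Nb2 {R}.
Arguments NZ {R}.
Arguments ND {R}.
Arguments DZ {R}.
Arguments DD {R}.
Arguments ge0_FTC_oo {R}.

Section Main.
Variable R : realType.
Local Notation mu := (@lebesgue_measure R).
Local Notation Dv u := (forall t : R, 0 < t < 1 -> exists d : R, is_derive t (1:R) u d).
Local Notation Nn u := (forall t : R, 0 < t < 1 -> 0 <= u t).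
Local Notation I u := (\int[mu]_(x in `]0%R, 1%R[) (u x)%:E)%E.

Lemma clin (y : R) : {for y, continuous (fun x : R => 1 + x)}.
Proof.
by apply: (@is_derive_cont R _ _ (0 + 1)).
Qed.

Lemma csq (y : R) : -1 < y -> {for y, continuous (fun x : R => Num.sqrt (1 + x))}.
Proof.
move=> yN.
have hL : is_derive y 1 (fun x : R => 1 + x) (0 + 1).
  by have := is_deriveD (is_derive_cst (1:R) y 1) (is_derive_id y 1); apply.
have hS : is_derive (1 + y) 1 (@Num.sqrt R) ((2 * Num.sqrt (1 + y))^-1).
  by apply: is_derive1_sqrt; lra.
exact: is_derive_cont (is_derive1_comp hS hL).
Qed.

Lemma recF (r : nat) :
  (2 * r%:R + 4) * scrF R r.+1 + (2 * r%:R + 1) * scrF R r = omega R r.+1.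
Proof.
have rp : (0:R) <= r%:R := ler0n _ _.
have h2 : (2^-1 : R) < 1 by rewrite invf_lt1 // ltr1n.
have p0 : (0:R) < r.+1%:R - 2^-1 by rewrite -natr1; lra.
have c10 : (0:R) < 2 * r%:R + 4 by lra.
have c20 : (0:R) < 2 * r%:R + 1 by lra.
have c10' := ltW c10.
have c20' := ltW c20.
have two0 : (0:R) <= 2 by [].
have N1 := NZ (R:=R) _ _ c10' (Nf1 r).
have N2 := NZ (R:=R) _ _ c20' (Nf2 r).
have N3 := NZ (R:=R) _ _ two0 (Nb1 r).
have N4 := NZ (R:=R) _ _ two0 (Nb2 r).
have D1 := DZ (R:=R) (2 * r%:R + 4) _ (Df1 r).
have D2 := DZ (R:=R) (2 * r%:R + 1) _ (Df2 r).
have D3 := DZ (R:=R) 2 _ (Db1 r).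
have D4 := DZ (R:=R) 2 _ (Db2 r).
have N12 := ND _ _ N1 N2.
have D12 := DD _ _ D1 D2.
have N123 := ND _ _ N12 N3.
have D123 := DD _ _ D12 D3.
have Ngg : Nn (gg r) := ND _ _ N123 N4.
have Dgg : Dv (gg r) := DD _ _ D123 D4.
have cas0 : {for 0, continuous (@asin R)} by apply: continuous_asin; lra.
have cpw1 : {for 1, continuous (@powR R ^~ (r.+1%:R - 2^-1))}.
  by apply: is_derive_cont; apply: is_derive1_powR.
have as1 : asin x @[x --> (1:R)^'-] --> asin 1.
  have m1 : (-1 : R) < 1 by lra.
  by have [_ _] := (continuous_within_itvP _ m1).1 asin_cont.
have H0 : HH r 0 = 0 :> R by rewrite /HH powR0 ?mulr0 ?mul0r // gt_eqF.
have H1 : HH r 1 = 2 * Num.sqrt 2 * pi :> R.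
  by rewrite /HH powR1 asin1; field.
have cgg : {in `]0, 1[, continuous (gg (R:=R) r)}.
  move=> x; rewrite in_itv /= => xI.
  by have [d hd] := Dgg x xI; exact: is_derive_cont hd.
have dHH : derivable_oo_LRcontinuous (HH (R:=R) r) 0 1.
  split.
  + by move=> x; rewrite in_itv /= => xI; have [] := deriv_HH r x xI.
  + have L := cvgM (cvgM (cvgM (cvgM (cvg_cst (2:R)) (powR_cvg0 p0))
       (cvg_at_right_filter (clin 0))) (cvg_at_right_filter (csq 0 _)))
       (cvg_at_right_filter cas0).
    rewrite H0; rewrite mulr0 !mul0r in L; apply: L; lra.
  + have L := cvgM (cvgM (cvgM (cvgM (cvg_cst (2:R)) (cvg_at_left_filter cpw1))
       (cvg_at_left_filter (clin 1))) (cvg_at_left_filter (csq 1 _))) as1.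
    by apply: L; lra.
have dH' : {in `]0, 1[, (HH (R:=R) r)^`()%classic =1 gg r}.
  move=> x; rewrite in_itv /= => xI.
  by have h := deriv_HH r x xI; rewrite derive1E derive_val.
have hF : I (gg r) = (HH r 1 - HH r 0)%:E := ge0_FTC_oo _ _ _ _ ltr01 Ngg cgg dHH dH'.
have hS : I (gg r) = ((2 * r%:R + 4)%:E * I (f1 r) + (2 * r%:R + 1)%:E * I (f2 r)
    + 2%:E * I (b1 r) + 2%:E * I (b2 r))%E.
  rewrite /gg (splitD _ _ N123 N4 D123 D4) (splitD _ _ N12 N3 D12 D3) (splitD _ _ N1 N2 D1 D2).
  rewrite (splitZ _ _ c10' (Nf1 r) (Df1 r)) (splitZ _ _ c20' (Nf2 r) (Df2 r)).
  by rewrite (splitZ _ _ two0 (Nb1 r) (Db1 r)) (splitZ _ _ two0 (Nb2 r) (Db2 r)).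
have fin : ((2 * r%:R + 4)%:E * I (f1 r) + (2 * r%:R + 1)%:E * I (f2 r)
    + 2%:E * I (b1 r) + 2%:E * I (b2 r))%E \is a fin_num by rewrite -hS hF.
rewrite !fin_numD in fin.
move: fin => /andP[/andP[/andP[fA fB] fC] fD].
have fJ1 := finZ _ _ c10 fA.
have fJ2 := finZ _ _ c20 fB.
have fJ3 := finZ _ _ (ltr0n _ 2) fC.
have fJ4 := finZ _ _ (ltr0n _ 2) fD.
have hR : (2 * r%:R + 4) * fine (I (f1 r)) + (2 * r%:R + 1) * fine (I (f2 r))
   + 2 * fine (I (b1 r)) + 2 * fine (I (b2 r)) = HH r 1 - HH r 0.
  by apply: EFin_inj; rewrite !EFinD !EFinM !fineK // -hS hF.
have eF1 : scrF R r.+1 = fine (I (f1 r)).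
  by rewrite /scrF /Rintegral (int_cc_oo (f1 r)) //; exact: mcont (Df1 r).
have eF2 : scrF R r = fine (I (f2 r)).
  by rewrite /scrF /Rintegral (int_cc_oo (f2 r)) //; exact: mcont (Df2 r).
have eB1 : Beta (r.+1%:R + 3 / 2) (2^-1 : R) = fine (I (b1 r)).
  by rewrite /Beta /Rintegral (int_cc_oo (b1 r)) //; exact: mcont (Db1 r).
have eB2 : Beta (r.+1%:R + 2^-1) (2^-1 : R) = fine (I (b2 r)).
  by rewrite /Beta /Rintegral (int_cc_oo (b2 r)) //; exact: mcont (Db2 r).
rewrite /omega eB1 eB2 eF1 eF2.
move: hR; rewrite H1 H0.
move: (fine (I (f1 r))) (fine (I (f2 r))) (fine (I (b1 r))) (fine (I (b2 r))) => X1 X2 Y1 Y2 hR.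
rewrite (_ : (2 * r%:R + 4) * X1 + (2 * r%:R + 1) * X2 =
  ((2 * r%:R + 4) * X1 + (2 * r%:R + 1) * X2 + 2 * Y1 + 2 * Y2) - 2 * Y1 - 2 * Y2);
  last by ring.
by rewrite hR; ring.
Qed.

End Main.

Local Close Scope classical_set_scope.

Lemma binS2 (r : nat) : ('C(r.+1.*2, r.+1) * r.+1 * r.+1 = r.+1.*2 * r.*2.+1 * 'C(r.*2, r))%N.
Proof.
have h1 : ('C(r.+1.*2, r.+1) * r.+1 = r.+1.*2 * 'C(r.*2.+1, r))%N.
  by rewrite mulnC -mul_bin_diag doubleS.
have h2 : ('C(r.*2.+1, r) * r.+1 = r.*2.+1 * 'C(r.*2, r))%N.
  rewrite mulnC (mul_bin_down r.*2.+1 r) /=.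
  congr (_ * _)%N; rewrite -addnn -addSn addnK //.
by rewrite h1 -mulnA h2 mulnA.
Qed.

Lemma closed_form (R : realType) (s w : nat -> R)
  (Hrec : forall r, (2 * r%:R + 4) * s r.+1 + (2 * r%:R + 1) * s r = w r.+1)
  (r : nat) :
  s r =
  (-1) ^+ r / 4 ^+ r * ('C(r.*2, r)%:R / (r.+1)%:R) *
  (s 0 + 2^-1 * \sum_(1 <= k < r.+1)
      ((-1) ^+ k * 4 ^+ k / 'C(k.*2, k)%:R * w k)).
Proof.
elim: r => [|r IH].
  by rewrite big_geq //= mulr0 addr0 expr0 bin0 !divr1 !mul1r.
have Bpos : (0 < 'C(r.*2, r))%N by rewrite bin_gt0 -addnn leq_addr.
have B'pos : (0 < 'C(r.+1.*2, r.+1))%N by rewrite bin_gt0 -addnn leq_addr.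
have hB : ('C(r.+1.*2, r.+1)%:R : R) =
   (2 * r%:R + 2) * (2 * r%:R + 1) * 'C(r.*2, r)%:R / (r%:R + 1) ^+ 2.
  apply: (@mulIf _ ((r%:R + 1) ^+ 2)); first by rewrite expf_neq0 // -natr1 pnatr_eq0.
  rewrite mulfVK; last by rewrite expf_neq0 // -natr1 pnatr_eq0.
  have := congr1 (fun n : nat => n%:R : R) (binS2 r).
  rewrite /= !natrM.
  have -> : ((r.+1.*2)%:R : R) = 2 * r%:R + 2 by rewrite -muln2 natrM -natr1; ring.
  have -> : ((r.*2.+1)%:R : R) = 2 * r%:R + 1 by rewrite -natr1 -muln2 natrM; ring.
  rewrite -natr1 expr2 !mulrA => ->.
  by ring.
rewrite big_nat_recr //=.

set W := w r.+1.
have rp : (0 : R) <= r%:R := ler0n _ _.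
have r2 : (2 * r%:R + 4 : R) != 0 by apply: lt0r_neq0; lra.
have sr1 : s r.+1 = (W - (2 * r%:R + 1) * s r) / (2 * r%:R + 4).
  by rewrite /W -(Hrec r) addrK mulrC mulrA mulVf ?mul1r.
have r0 : (r%:R + 1 : R) != 0 by apply: lt0r_neq0; lra.
have r3 : (r%:R + 2 : R) != 0 by apply: lt0r_neq0; lra.
have r4 : (2 * r%:R + 2 : R) != 0 by apply: lt0r_neq0; lra.
have r5 : (2 * r%:R + 1 : R) != 0 by apply: lt0r_neq0; lra.
have B0 : ('C(r.*2, r)%:R : R) != 0 by rewrite pnatr_eq0 -lt0n.
have f40 : (4 ^+ r : R) != 0 by rewrite expf_neq0.
rewrite sr1 IH !exprS hB.
have -> : ((r.+1.+1)%:R : R) = r%:R + 2 by rewrite -!natr1; ring.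
have -> : ((r.+1)%:R : R) = r%:R + 1 by rewrite -natr1.
clear sr1 IH hB; move: (s 0) (\sum_(1 <= k < r.+1) _) (4 ^+ r) ('C(r.*2, r)%:R : R) W r%:R f40 B0 r0 r2 r3 r4 r5 rp.
rewrite -signr_odd; case: (odd r); rewrite /= ?expr1 ?expr0.
  move=> S0 Y f4 B W' x h1 h2 h3 h4 h5 h6 h7 _.
  by field; rewrite h1 h2 h3 h4 h5 h6 h7.
move=> S0 Y f4 B W' x h1 h2 h3 h4 h5 h6 h7 _.
by field; rewrite h1 h2 h3 h4 h5 h6 h7.
Qed.

Theorem proposition6p0p1 (R : realType) (r : nat) :
  scrF R r =
  (-1) ^+ r / 4 ^+ r * ('C(r.*2, r)%:R / (r.+1)%:R) *
  (scrF R 0 + 2^-1 * \sum_(1 <= k < r.+1)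
      ((-1) ^+ k * 4 ^+ k / 'C(k.*2, k)%:R * omega R k)).
Proof.
exact: (@closed_form R _ _ (@recF R) r).
Qed.
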